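(* Let $k\geq3$ and let $H$ be a closed subgroup of $\mathrm{GL}_k(\mathbb{R})$ with $\mathrm{SO}(k)\subset H$, such that $H$ preserves, under the action by conjugation, some linear subspace $E\subset\mathrm{End}(\mathbb{R}^k)$ of dimension $d$ with $1<d<k^2-1$. Then $H$ is contained in the conformal group $\mathrm{CO}(k)=\mathbb{R}^*\,\mathrm{SO}(k)$. *)

(* Defs.v *)
From HB Require Import structures.
From mathcomp Require Import all_boot all_order all_algebra.
From mathcomp Require Import all_classical all_reals topology normedtype matrix_topology.
Set Implicit Arguments. Unset Strict Implicit. Unset Printing Implicit Defensive.
Import Order.TTheory GRing.Theory Num.Theory numFieldNormedType.Exports.
Local Open Scope ring_scope.
Local Open Scope classical_set_scope.

Definition SOmx (R : realType) (k : nat) : set 'M[R]_k :=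
  [set A | A *m A^T = 1%:M /\ \det A = 1].

Definition COmx (R : realType) (k : nat) : set 'M[R]_k :=
  [set A | exists2 c : R, 0 < c & A *m A^T = c%:M].

Definition is_GL_subgroup (R : realType) (k : nat) (H : set 'M[R]_k) : Prop :=
  [/\ H 1%:M,
      (forall A, H A -> A \in unitmx),
      (forall A B, H A -> H B -> H (A *m B)) &
      (forall A, H A -> H (invmx A))].

Definition closed_in_GL (R : realType) (k : nat) (H : set 'M[R]_k) : Prop :=
  forall A, closure H A -> A \in unitmx -> H A.

Definition conj_preserves (R : realType) (k : nat) (H : set 'M[R]_k)
  (E : {vspace 'M[R]_k}) : Prop :=
  forall h A, H h -> A \in E -> h *m A *m invmx h \in E.

(* Main.v *)
Require Import Defs.
From HB Require Import structures.
From mathcomp Require Import all_boot all_order all_algebra.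
From mathcomp Require Import all_classical all_reals topology normedtype matrix_topology.
From mathcomp Require Import ring lra zify.
Import Order.TTheory GRing.Theory Num.Theory numFieldNormedType.Exports.
Local Open Scope ring_scope.
Local Open Scope classical_set_scope.
Set Implicit Arguments. Unset Strict Implicit. Unset Printing Implicit Defensive.
Lemma eD (R : realType) k (A B : 'M[R]_k) i j : (A + B) i j = A i j + B i j.
Proof. by rewrite mxE. Qed.
Lemma eN (R : realType) k (A : 'M[R]_k) i j : (- A) i j = - A i j.
Proof. by rewrite mxE. Qed.
Lemma eZ (R : realType) k (c : R) (A : 'M[R]_k) i j : (c *: A) i j = c * A i j.
Proof. by rewrite mxE. Qed.
Lemma eB (R : realType) k (A B : 'M[R]_k) i j : (A - B) i j = A i j - B i j.
Proof. by rewrite !mxE. Qed.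
Lemma e0 (R : realType) k i j : (0 : 'M[R]_k) i j = 0.
Proof. by rewrite mxE. Qed.
Lemma sAl (R : realType) k (a : R) (A B : 'M[R]_k) : a *: A *m B = a *: (A *m B).
Proof. by rewrite scalemxAl. Qed.
Lemma sAr (R : realType) k (a : R) (A B : 'M[R]_k) : A *m (a *: B) = a *: (A *m B).
Proof. by rewrite scalemxAr. Qed.

Ltac mexp := rewrite ?(mulmxDl, mulmxDr, mulmxBl, mulmxBr, mulNmx, mulmxN, mul1mx, mulmx1, mulmxA, sAl, sAr, mul0mx, mulmx0).
Ltac ment := apply/matrixP => ?? ; rewrite ?(eD, eN, eZ, eB, e0).

Definition Jm (R : realType) k (i j : 'I_k) : 'M[R]_k := delta_mx j i - delta_mx i j.
Definition Pm (R : realType) k (i j : 'I_k) : 'M[R]_k := delta_mx i i + delta_mx j j.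
Definition br (R : realType) k (X Y : 'M[R]_k) := X *m Y - Y *m X.
Definition lc (R : realType) k (i j : 'I_k) (a b d : R) : 'M[R]_k :=
  a *: 1%:M + b *: Jm R i j + d *: Pm R i j.
Definition rot (R : realType) k (i j : 'I_k) (c s : R) := lc i j 1 s (c - 1).

Lemma dd (R : realType) k (a b c d : 'I_k) :
  delta_mx a b *m delta_mx c d = (if b == c then delta_mx a d else 0 : 'M[R]_k).
Proof. by rewrite mul_delta_mx_cond; case: (b == c). Qed.

Ltac dsimp i j ij := rewrite ?dd ?eqxx ?(eq_sym j i) ?(negbTE ij); ment; ring.

Lemma JJ (R : realType) k (i j : 'I_k) : i != j -> Jm R i j *m Jm R i j = - Pm R i j.
Proof.
move=> ij; rewrite /Jm /Pm; mexp; dsimp i j ij.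
Qed.
Lemma JP (R : realType) k (i j : 'I_k) : i != j -> Jm R i j *m Pm R i j = Jm R i j.
Proof.
move=> ij; rewrite /Jm /Pm; mexp; dsimp i j ij.
Qed.
Lemma PJ (R : realType) k (i j : 'I_k) : i != j -> Pm R i j *m Jm R i j = Jm R i j.
Proof.
move=> ij; rewrite /Jm /Pm; mexp; dsimp i j ij.
Qed.
Lemma PP (R : realType) k (i j : 'I_k) : i != j -> Pm R i j *m Pm R i j = Pm R i j.
Proof.
move=> ij; rewrite /Pm; mexp; dsimp i j ij.
Qed.
Lemma Jtr (R : realType) k (i j : 'I_k) : (Jm R i j)^T = - Jm R i j.
Proof. by rewrite /Jm linearB /= !trmx_delta opprB. Qed.
Lemma Ptr (R : realType) k (i j : 'I_k) : (Pm R i j)^T = Pm R i j.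
Proof. by rewrite /Pm linearD /= !trmx_delta. Qed.

Lemma lc_mul (R : realType) k (i j : 'I_k) (a b d a' b' d' : R) : i != j ->
  lc i j a b d *m lc i j a' b' d' =
  lc i j (a * a') (a * b' + b * a' + b * d' + d * b') (a * d' - b * b' + d * a' + d * d').
Proof.
move=> ij; rewrite /lc /Jm /Pm; mexp; dsimp i j ij.
Qed.
Lemma lc_tr (R : realType) k (i j : 'I_k) (a b d : R) :
  (lc i j a b d)^T = lc i j a (- b) d.
Proof.
rewrite /lc /Jm /Pm !linearD !linearZ /= !linearN /= trmx1 !trmx_delta; ment; ring.
Qed.

Lemma lc_eq (R : realType) k (i j : 'I_k) (a b d a' b' d' : R) :
  a = a' -> b = b' -> d = d' -> lc i j a b d = lc i j a' b' d'.
Proof. by move=> -> -> ->. Qed.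
Lemma lc1 (R : realType) k (i j : 'I_k) : lc i j (1 : R) 0 0 = 1%:M.
Proof. by rewrite /lc !scale0r !addr0 scale1r. Qed.

Lemma rot_orth (R : realType) k (i j : 'I_k) (c s : R) : i != j -> c ^+ 2 + s ^+ 2 = 1 ->
  rot i j c s *m (rot i j c s)^T = 1%:M.
Proof.
move=> ij h; rewrite /rot lc_tr lc_mul // -(lc1 R i j); apply: lc_eq; try ring.
by transitivity (c ^+ 2 + s ^+ 2 - 1); [ring | rewrite h subrr].
Qed.
Lemma rot_sq (R : realType) k (i j : 'I_k) (c s : R) : i != j ->
  rot i j c s *m rot i j c s = rot i j (c ^+ 2 - s ^+ 2) (2 * c * s).
Proof. by move=> ij; rewrite /rot lc_mul //; apply: lc_eq; ring. Qed.

Lemma rot_SO (R : realType) k (i j : 'I_k) (c s : R) : i != j -> c ^+ 2 + s ^+ 2 = 1 ->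
  SOmx (rot i j (c ^+ 2 - s ^+ 2) (2 * c * s)).
Proof.
move=> ij h; split.
  apply: rot_orth => //; by transitivity ((c ^+ 2 + s ^+ 2) ^+ 2); [ring | rewrite h expr1n].
rewrite -rot_sq // det_mulmx.
have := congr1 determinant (rot_orth ij h).
by rewrite det_mulmx det_tr det1.
Qed.

Lemma orth_inv (R : realType) k (A : 'M[R]_k) : A *m A^T = 1%:M -> A \in unitmx ->
  invmx A = A^T.
Proof.
move=> h u; by rewrite -[RHS]mul1mx -(mulVmx u) -mulmxA h mulmx1.
Qed.

Lemma rot_diff (R : realType) k (i j : 'I_k) (c s : R) (A : 'M[R]_k) :
  rot i j c s *m A *m (rot i j c s)^T - (rot i j c s)^T *m A *m rot i j c s =
  (2 * s) *: br (Jm R i j) A + (2 * s * (c - 1)) *: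
     (Jm R i j *m A *m Pm R i j - Pm R i j *m A *m Jm R i j).
Proof.
rewrite /rot lc_tr /lc /br /Jm /Pm; mexp; ment; ring.
Qed.

Lemma conjE (R : realType) k (H : set 'M[R]_k) (E : {vspace 'M[R]_k}) g A :
  is_GL_subgroup H -> conj_preserves H E -> H g -> A \in E ->
  g *m A *m invmx g \in E /\ invmx g *m A *m g \in E.
Proof.
move=> [H1 Hu HM HV] Hp Hg HA; split; first exact: Hp.
have := Hp _ _ (HV _ Hg) HA; by rewrite invmxK.
Qed.

Lemma half_sqrt (R : realType) : Num.sqrt (2^-1 : R) ^+ 2 = 2^-1.
Proof. by rewrite sqr_sqrtr // invr_ge0 ler0n. Qed.
Lemma fifth_sqrt (R : realType) : Num.sqrt (5^-1 : R) ^+ 2 = 5^-1.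
Proof. by rewrite sqr_sqrtr // invr_ge0 ler0n. Qed.

Lemma rotH (R : realType) k (H : set 'M[R]_k) (i j : 'I_k) (c s c' s' : R) :
  @SOmx R k `<=` H -> i != j -> c' ^+ 2 + s' ^+ 2 = 1 ->
  c = c' ^+ 2 - s' ^+ 2 -> s = 2 * c' * s' -> H (rot i j c s).
Proof. by move=> HS ij h -> ->; apply: HS; apply: rot_SO. Qed.

Lemma rotH01 (R : realType) k (H : set 'M[R]_k) (i j : 'I_k) :
  @SOmx R k `<=` H -> i != j -> H (rot i j 0 1).
Proof.
move=> HS ij; pose a : R := Num.sqrt (2^-1).
have ha : a ^+ 2 = 2^-1 by exact: half_sqrt.
apply: (rotH (c' := a) (s' := a)) => //.
- by rewrite ha; field.
- ring.
- transitivity (2 * a ^+ 2); last ring. by rewrite ha; field.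
Qed.

Lemma rotH35 (R : realType) k (H : set 'M[R]_k) (i j : 'I_k) :
  @SOmx R k `<=` H -> i != j -> H (rot i j (3/5) (4/5)).
Proof.
move=> HS ij; pose a : R := Num.sqrt (5^-1).
have ha : a ^+ 2 = 5^-1 by exact: fifth_sqrt.
apply: (rotH (c' := 2 * a) (s' := a)) => //.
- by rewrite exprMn ha; field.
- by rewrite exprMn ha; field.
- transitivity (4 * a ^+ 2); last ring. by rewrite ha; field.
Qed.

Lemma EJ (R : realType) k (H : set 'M[R]_k) (E : {vspace 'M[R]_k}) (i j : 'I_k) A :
  is_GL_subgroup H -> conj_preserves H E -> @SOmx R k `<=` H -> A \in E ->
  br (Jm R i j) A \in E.
Proof.
move=> HG Hp HS HA.
case: (eqVneq i j) => [<-|ij].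
  by rewrite /br /Jm subrr mulmx0 mul0mx subrr mem0v.
have Dm : forall c s, H (rot i j c s) -> c ^+ 2 + s ^+ 2 = 1 ->
   rot i j c s *m A *m (rot i j c s)^T - (rot i j c s)^T *m A *m rot i j c s \in E.
  move=> c s Hr hcs.
  have [u1 u2] := conjE HG Hp Hr HA.
  have Hu : rot i j c s \in unitmx by case: HG => _ Hu _ _; exact: Hu.
  rewrite (orth_inv (rot_orth ij hcs) Hu) in u1 u2.
  exact: memvB.
have D1 := Dm 0 1 (rotH01 HS ij) ltac:(by rewrite expr0n /= add0r expr1n).
have D2 := Dm (3/5) (4/5) (rotH35 HS ij) ltac:(by field).
rewrite !rot_diff in D1 D2.
have -> : br (Jm R i j) A = (- 3^-1) *: ((2 * 1) *: br (Jm R i j) A + (2 * 1 * (0 - 1)) *: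
     (Jm R i j *m A *m Pm R i j - Pm R i j *m A *m Jm R i j)) +
   (25 / 24) *: ((2 * (4/5)) *: br (Jm R i j) A + (2 * (4/5) * (3/5 - 1)) *:
     (Jm R i j *m A *m Pm R i j - Pm R i j *m A *m Jm R i j)).
  by ment; field.
by apply: memvD; apply: memvZ.
Qed.

Definition Lset (R : realType) k (E : {vspace 'M[R]_k}) (X : 'M[R]_k) : Prop :=
  forall A, A \in E -> br X A \in E.

Lemma L_add (R : realType) k (E : {vspace 'M[R]_k}) X Y :
  Lset E X -> Lset E Y -> Lset E (X + Y).
Proof.
move=> hX hY A HA; have -> : br (X + Y) A = br X A + br Y A by rewrite /br; mexp; ment; ring.
by rewrite memvD ?hX ?hY.
Qed.
Lemma L_scale (R : realType) k (E : {vspace 'M[R]_k}) (c : R) X :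
  Lset E X -> Lset E (c *: X).
Proof.
move=> hX A HA; have -> : br (c *: X) A = c *: br X A by rewrite /br; mexp; ment; ring.
by rewrite memvZ ?hX.
Qed.
Lemma L_br (R : realType) k (E : {vspace 'M[R]_k}) X Y :
  Lset E X -> Lset E Y -> Lset E (br X Y).
Proof.
move=> hX hY A HA.
have -> : br (br X Y) A = br X (br Y A) - br Y (br X A) by rewrite /br; mexp; ment; ring.
by apply: memvB; [apply: hX | apply: hY]; [apply: hY | apply: hX].
Qed.
Lemma L_conj (R : realType) k (H : set 'M[R]_k) (E : {vspace 'M[R]_k}) g X :
  is_GL_subgroup H -> conj_preserves H E -> H g -> Lset E X -> Lset E (g *m X *m invmx g).
Proof.
move=> HG Hp Hg hX A HA.
have Hu : g \in unitmx by case: HG => _ Hu _ _; exact: Hu.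
have h1 : forall Z : 'M[R]_k, Z *m g *m invmx g = Z by move=> Z; rewrite -mulmxA mulmxV // mulmx1.
have -> : br (g *m X *m invmx g) A = g *m br X (invmx g *m A *m g) *m invmx g.
  rewrite /br; mexp; rewrite !h1 mulmxV // mul1mx; done.
have [_ h2] := conjE HG Hp Hg HA.
have [h3 _] := conjE HG Hp Hg (hX _ h2).
exact: h3.
Qed.
Lemma L_J (R : realType) k (H : set 'M[R]_k) (E : {vspace 'M[R]_k}) (i j : 'I_k) :
  is_GL_subgroup H -> conj_preserves H E -> @SOmx R k `<=` H -> Lset E (Jm R i j).
Proof. by move=> HG Hp HS A HA; exact: (EJ i j HG Hp HS HA). Qed.

Lemma JmE (R : realType) k (i j : 'I_k) : Jm R i j = delta_mx j i - delta_mx i j.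
Proof. by []. Qed.
Lemma PmE (R : realType) k (i j : 'I_k) : Pm R i j = delta_mx i i + delta_mx j j.
Proof. by []. Qed.
Opaque Jm Pm.

Lemma dlE (R : realType) k (a b x y : 'I_k) (Y : 'M[R]_k) :
  (delta_mx a b *m Y) x y = (x == a)%:R * Y b y.
Proof.
rewrite mxE (bigD1 b) //= !mxE eqxx andbT big1 ?addr0 // => l /negbTE lb.
by rewrite mxE lb andbF mul0r.
Qed.
Lemma drE (R : realType) k (a b x y : 'I_k) (Y : 'M[R]_k) :
  (Y *m delta_mx a b) x y = Y x a * (y == b)%:R.
Proof.
rewrite mxE (bigD1 a) //= !mxE eqxx big1 ?addr0 // => l /negbTE la.
by rewrite mxE la mulr0.
Qed.
Lemma sand (R : realType) k (a b c d : 'I_k) (Y : 'M[R]_k) :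
  delta_mx a b *m Y *m delta_mx c d = Y b c *: delta_mx a d.
Proof.
apply/matrixP => x y; rewrite drE dlE !mxE.
by case: (x == a); case: (y == d); rewrite /= ?mulr0 ?mul0r ?mulr1 ?mul1r.
Qed.

Lemma JJr (R : realType) k (i j : 'I_k) (X : 'M[R]_k) : i != j ->
  X *m Jm R i j *m Jm R i j = - (X *m Pm R i j).
Proof. by move=> ij; rewrite -mulmxA JJ // mulmxN. Qed.
Lemma JPr (R : realType) k (i j : 'I_k) (X : 'M[R]_k) : i != j ->
  X *m Jm R i j *m Pm R i j = X *m Jm R i j.
Proof. by move=> ij; rewrite -mulmxA JP. Qed.
Lemma PJr (R : realType) k (i j : 'I_k) (X : 'M[R]_k) : i != j ->
  X *m Pm R i j *m Jm R i j = X *m Jm R i j.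
Proof. by move=> ij; rewrite -mulmxA PJ. Qed.
Lemma PPr (R : realType) k (i j : 'I_k) (X : 'M[R]_k) : i != j ->
  X *m Pm R i j *m Pm R i j = X *m Pm R i j.
Proof. by move=> ij; rewrite -mulmxA PP. Qed.

Lemma Ucomp (R : realType) k (p q : 'I_k) (Y : 'M[R]_k) :
  Jm R p q *m Y *m Pm R p q - Pm R p q *m Y *m Jm R p q =
  (Y p p - Y q q) *: (delta_mx p q + delta_mx q p) +
  (Y p q + Y q p) *: (delta_mx q q - delta_mx p p).
Proof. rewrite JmE PmE; mexp; rewrite !sand; ment; ring. Qed.

Lemma brJU (R : realType) k (p q : 'I_k) : p != q ->
  br (Jm R p q) (delta_mx q q - delta_mx p p) = (-2) *: (delta_mx p q + delta_mx q p).
Proof. move=> pq; rewrite /br JmE; mexp; dsimp p q pq. Qed.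
Lemma brJV (R : realType) k (p q : 'I_k) : p != q ->
  br (Jm R p q) (delta_mx p q + delta_mx q p) = 2 *: (delta_mx q q - delta_mx p p).
Proof. move=> pq; rewrite /br JmE; mexp; dsimp p q pq. Qed.
Lemma ddr (R : realType) k (a b c d : 'I_k) (X : 'M[R]_k) :
  X *m delta_mx a b *m delta_mx c d = (if b == c then X *m delta_mx a d else 0).
Proof. by rewrite -mulmxA dd; case: (b == c); rewrite ?mulmx0. Qed.

Lemma Tform (R : realType) k (p q : 'I_k) (Y : 'M[R]_k) : p != q ->
  br (Jm R p q) (Y + rot p q (-1) 0 *m Y *m (rot p q (-1) 0)^T) =
  2 *: (Jm R p q *m Y *m Pm R p q - Pm R p q *m Y *m Jm R p q).
Proof.
move=> pq; rewrite /rot lc_tr /lc /br JmE PmE oppr0 !scale0r !addr0 scale1r; mexp.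
do 3 (rewrite ?dd ?ddr ?sand ?eqxx ?(eq_sym q p) ?(negbTE pq) /=; mexp;
  rewrite ?scale0r ?scale1r ?scaler0 ?addr0 ?add0r ?subr0 ?sub0r ?oppr0).
ment; ring.
Qed.

Lemma rotHm1 (R : realType) k (H : set 'M[R]_k) (i j : 'I_k) :
  @SOmx R k `<=` H -> i != j -> H (rot i j (-1) 0).
Proof.
move=> HS ij; apply: (rotH (c' := 0) (s' := 1)) => //.
- by rewrite expr0n /= add0r expr1n.
- by rewrite expr0n /= expr1n sub0r.
- by rewrite mulr0 mul0r.
Qed.

Lemma br_lin (R : realType) k (J X Z : 'M[R]_k) (a b : R) :
  br J (a *: X + b *: Z) = a *: br J X + b *: br J Z.
Proof. rewrite /br; mexp; ment; ring. Qed.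

Lemma sq_pos (R : realType) (x y : R) : x != 0 \/ y != 0 -> x ^+ 2 + y ^+ 2 != 0.
Proof.
move=> h; rewrite paddr_eq0 ?sqr_ge0 // !sqrf_eq0; apply/negP => /andP [/eqP x0 /eqP y0].
by case: h => /eqP.
Qed.

Lemma L_delta (R : realType) k (H : set 'M[R]_k) (E : {vspace 'M[R]_k}) (p q : 'I_k) Y :
  is_GL_subgroup H -> conj_preserves H E -> @SOmx R k `<=` H -> p != q ->
  Lset E Y -> (Y p q + Y q p != 0 \/ Y p p - Y q q != 0) -> Lset E (delta_mx p q).
Proof.
move=> HG Hp HS pq hY hne.
set D : 'M[R]_k := rot p q (-1) 0.
have HD : H D by apply: rotHm1.
have Du : D \in unitmx by case: HG => _ Hu _ _; exact: Hu.
have DO : D *m D^T = 1%:M.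
  by apply: rot_orth => //; rewrite sqrrN expr1n expr0n /= addr0.
have DT := orth_inv DO Du.
have hQ : Lset E (Y + D *m Y *m D^T).
  apply: L_add => //; rewrite -DT; exact: (L_conj HG Hp HD hY).
have hJ : Lset E (Jm R p q) by exact: (L_J p q HG Hp HS).
have hT := L_br hJ hQ.
set x := Y p q + Y q p. set y := Y p p - Y q q.
have eT : br (Jm R p q) (Y + D *m Y *m D^T) =
   2 *: (y *: (delta_mx p q + delta_mx q p) + x *: (delta_mx q q - delta_mx p p)).
  by rewrite /D Tform // Ucomp.
rewrite eT in hT.
have hT' := L_br hJ hT.
have eT' : br (Jm R p q) (2 *: (y *: (delta_mx p q + delta_mx q p) + x *: (delta_mx q q - delta_mx p p)))
   = 4 *: (y *: (delta_mx q q - delta_mx p p) - x *: (delta_mx p q + delta_mx q p)).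
  rewrite /br JmE; mexp; dsimp p q pq.
rewrite eT' in hT'.
have nz := sq_pos hne.
have -> : delta_mx p q = (y / (4 * (x ^+ 2 + y ^+ 2))) *:
   (2 *: (y *: (delta_mx p q + delta_mx q p) + x *: (delta_mx q q - delta_mx p p))) +
   (- x / (8 * (x ^+ 2 + y ^+ 2))) *:
   (4 *: (y *: (delta_mx q q - delta_mx p p) - x *: (delta_mx p q + delta_mx q p))) +
   (-1/2) *: Jm R p q.
  rewrite JmE /x /y; ment. by field.
exact: (L_add (L_add (L_scale _ hT) (L_scale _ hT')) (L_scale _ hJ)).
Qed.

Lemma third k (a b : 'I_k) : (3 <= k)%N -> exists c : 'I_k, c != a /\ c != b.
Proof.
move=> k3.
have h0 : (0 < k)%N by lia. have h1 : (1 < k)%N by lia. have h2 : (2 < k)%N by lia.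
case: (boolP ((Ordinal h0 != a) && (Ordinal h0 != b))) => [/andP[? ?]|H0].
  by exists (Ordinal h0).
case: (boolP ((Ordinal h1 != a) && (Ordinal h1 != b))) => [/andP[? ?]|H1].
  by exists (Ordinal h1).
exists (Ordinal h2).
move: H0 H1; rewrite !negb_and !negbK -!val_eqE /= => H0 H1.
case/orP: H0 => /eqP H0; case/orP: H1 => /eqP H1;
  by split; apply/eqP => E; lia.
Qed.

Ltac nsimp := rewrite ?eqxx; repeat match goal with
 | H : is_true (?x != ?y) |- context [?x == ?y] => rewrite (negbTE H)
 | H : is_true (?x != ?y) |- context [?y == ?x] => rewrite (eq_sym y x) (negbTE H)
 end.

Lemma move1 (R : realType) k (p q r : 'I_k) : p != q -> r != p -> r != q ->
  br (Jm R r p) (delta_mx p q) = - delta_mx r q.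
Proof.
move=> pq rp rq; rewrite /br JmE; mexp; rewrite !dd; nsimp; ment; ring.
Qed.
Lemma move2 (R : realType) k (p q s : 'I_k) : p != q -> s != p -> s != q ->
  br (Jm R q s) (delta_mx p q) = delta_mx p s.
Proof.
move=> pq sp sq; rewrite /br JmE; mexp; rewrite !dd; nsimp; ment; ring.
Qed.

Lemma moving (R : realType) k (V : 'M[R]_k -> Prop) (p q : 'I_k) : (3 <= k)%N ->
  (forall a b X, V X -> V (br (Jm R a b) X)) -> (forall (c : R) X, V X -> V (c *: X)) ->
  p != q -> V (delta_mx p q) -> forall a b, a != b -> V (delta_mx a b).
Proof.
move=> k3 hJ hZ pq hpq.
have m1 : forall p q r, p != q -> r != p -> r != q -> V (delta_mx p q) -> V (delta_mx r q).
  move=> p' q' r pq' rp rq h; rewrite -[delta_mx _ _]opprK -scaleN1r -(move1 R pq' rp rq).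
  by apply: hZ; apply: hJ.
have m2 : forall p q s, p != q -> s != p -> s != q -> V (delta_mx p q) -> V (delta_mx p s).
  move=> p' q' s pq' sp sq h; rewrite -(move2 R pq' sp sq); by apply: hJ.
have sw : forall p q r, p != q -> r != p -> r != q -> V (delta_mx p q) -> V (delta_mx q p).
  move=> p' q' r pq' rp rq h.
  have h1 := m1 _ _ _ pq' rp rq h.
  have h2 : V (delta_mx r p') by apply: (m2 _ _ _ _ _ _ h1) => //; rewrite eq_sym.
  by apply: (m1 _ _ _ _ _ _ h2) => //; rewrite eq_sym.
move=> a b ab.
have [r [rp rq]] := third p q k3.
case: (eqVneq a p) => [eap|ap].
  subst a.
  case: (eqVneq b q) => [->|bq] //.
  by apply: (m2 _ _ _ pq _ bq hpq); rewrite eq_sym.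
case: (eqVneq a q) => [eaq|aq].
  subst a.
  have hqp := sw _ _ _ pq rp rq hpq.
  case: (eqVneq b p) => [->|bp] //.
  apply: (m2 _ _ _ _ _ bp hqp); first by rewrite eq_sym.
  by rewrite eq_sym.
have haq := m1 _ _ _ pq ap aq hpq.
case: (eqVneq b q) => [->|bq] //.
by apply: (m2 _ _ _ aq _ bq haq); rewrite eq_sym.
Qed.

Lemma commut (R : realType) k (P : 'M[R]_k) (i0 : 'I_k) : (3 <= k)%N ->
  (forall p q, P *m Jm R p q = Jm R p q *m P) -> P = (P i0 i0)%:M.
Proof.
move=> k3 hc.
have hE : forall p q a b, (P *m Jm R p q) a b = (Jm R p q *m P) a b by move=> p q a b; rewrite hc.
have diag : forall p q, p != q -> P p p = P q q.
  move=> p q pq; have := hE p q p q; rewrite JmE mulmxBr mulmxBl !eB !drE !dlE.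
  nsimp => /= e; move: e; rewrite ?mulr0 ?mul0r ?mulr1 ?mul1r ?sub0r ?subr0 => /eqP.
  by rewrite eqr_opp => /eqP.
apply/matrixP => a b; rewrite mxE.
case: (eqVneq a b) => [<-|ab] /=.
  by case: (eqVneq a i0) => [->|ai]; rewrite ?mulr1n //; apply: diag.
rewrite mulr0n.
have [c [ca cb]] := third a b k3.
have := hE c b a c; rewrite JmE mulmxBr mulmxBl !eB !drE !dlE.
nsimp => /=; by rewrite mulr1 mulr0 subr0 !mul0r subrr.
Qed.

Lemma CO_of (R : realType) k (h : 'M[R]_k) (i0 : 'I_k) : (3 <= k)%N -> h \in unitmx ->
  (forall p q, (h *m Jm R p q *m invmx h)^T = - (h *m Jm R p q *m invmx h)) -> COmx h.
Proof.
move=> k3 hu hJ.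
have hTu : h^T \in unitmx by rewrite unitmx_tr.
have r1 : forall X : 'M[R]_k, X *m invmx h *m h = X by move=> X; rewrite -mulmxA mulVmx // mulmx1.
have r2 : forall X : 'M[R]_k, X *m h *m invmx h = X by move=> X; rewrite -mulmxA mulmxV // mulmx1.
have hc : forall p q, (h^T *m h) *m Jm R p q = Jm R p q *m (h^T *m h).
  move=> p q; have e := hJ p q; have JT := Jtr R p q.
  move: (Jm R p q) e JT => J e JT.
  rewrite !trmx_mul JT trmx_inv in e.
  have e2 := congr1 (fun M => h^T *m M *m h) e; simpl in e2.
  move: e2; mexp; rewrite mulmxV // mul1mx r1 => /oppr_inj.
  by move=> ->.
have eP := commut i0 k3 hc.
set c := (h^T *m h) i0 i0 in eP.
exists c.
  rewrite lt0r; apply/andP; split.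
    apply/eqP => c0.
    have := congr1 determinant eP; rewrite det_mulmx det_tr det_scalar c0 expr0n.
    have -> : (k == 0)%N = false by apply/eqP; lia.
    move=> /eqP; rewrite mulf_eq0 orbb; apply/negP.
    by rewrite -unitfE -unitmxE.
  rewrite /c mxE; apply: sumr_ge0 => l _; rewrite mxE -expr2; exact: sqr_ge0.
have hT : h^T = c *: invmx h by rewrite -[h^T]r2 eP mul_scalar_mx.
by rewrite hT -scalemxAr mulmxV // scalemx1.
Qed.

Lemma trJ (R : realType) k (p q : 'I_k) : \tr (Jm R p q) = 0.
Proof.
have e : \tr (Jm R p q) = - \tr (Jm R p q) by rewrite -{1}mxtrace_tr Jtr linearN.
have : (\tr (Jm R p q)) *+ 2 == 0 by rewrite mulr2n {1}e addNr.
by rewrite mulrn_eq0 /= => /eqP.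
Qed.

Lemma antisym_of (R : realType) k (Y : 'M[R]_k) (i0 : 'I_k) : \tr Y = 0 ->
  (forall a b, a != b -> Y a b + Y b a = 0 /\ Y a a - Y b b = 0) -> Y^T = - Y.
Proof.
move=> tr0 hY.
have dg : forall a, Y a a = Y i0 i0.
  move=> a; case: (eqVneq a i0) => [->//|ai]; have [_ /eqP] := hY _ _ ai.
  by rewrite subr_eq0 => /eqP.
have Y0 : Y i0 i0 = 0.
  move: tr0; rewrite /mxtrace (eq_bigr (fun _ => Y i0 i0)) ?sumr_const ?card_ord; last by move=> a _; rewrite dg.
  move=> /eqP; rewrite mulrn_eq0 => /orP [/eqP k0|/eqP //].
  by have := ltn_ord i0; lia.
apply/matrixP => a b; rewrite !mxE.
case: (eqVneq a b) => [<-|ab]; first by rewrite dg Y0 oppr0.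
have [e _] := hY _ _ ab; by apply/eqP; rewrite -addr_eq0 addrC e.
Qed.

Lemma dbr (R : realType) k (a b : 'I_k) : a != b ->
  br (delta_mx a b) (delta_mx b a) = delta_mx a a - delta_mx b b :> 'M[R]_k.
Proof. move=> ab; rewrite /br; mexp; rewrite !dd; nsimp; ment; ring. Qed.

Lemma dbr2 (R : realType) k (a b : 'I_k) (A : 'M[R]_k) : a != b ->
  br (delta_mx a b) (br (delta_mx a b) A) = (-2 * A b a) *: delta_mx a b.
Proof.
move=> ab; rewrite /br; mexp; rewrite ?dd ?ddr ?sand; nsimp; mexp.
rewrite ?sand; ment; ring.
Qed.

Lemma brJ_entry (R : realType) k (i j : 'I_k) (A : 'M[R]_k) : i != j ->
  (br (Jm R i j) A) i j = A i i - A j j.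
Proof.
move=> ij; rewrite /br JmE mulmxBl mulmxBr !eB !drE !dlE; nsimp => /=.
ring.
Qed.

Lemma dimfin (a b k : nat) : (a < k * k - 1)%N -> (b <= a + 1)%N -> (k * k <= b)%N -> False.
Proof. lia. Qed.

Unset Implicit Arguments.
Set Strict Implicit.

Theorem lemma5p3 (R : realType) (k : nat) (H : set 'M[R]_k)
  (E : {vspace 'M[R]_k}) :
  (3 <= k)%N ->
  is_GL_subgroup H -> closed_in_GL H ->
  @SOmx R k `<=` H ->
  conj_preserves H E ->
  (1 < \dim E)%N -> (\dim E < k ^ 2 - 1)%N ->
  H `<=` @COmx R k.
Proof.
move=> k3 HG _ HS Hp d1 d2 h Hh.
have k0 : (0 < k)%N by lia.
pose i0 : 'I_k := Ordinal k0.
have hu : h \in unitmx by case: HG => _ Hu _ _; exact: Hu.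
pose Y p q := h *m Jm R p q *m invmx h.
case: (pselect (exists p q a b, a != b /\
   ((Y p q) a b + (Y p q) b a != 0 \/ (Y p q) a a - (Y p q) b b != 0)))
   => [[p [q [a [b [ab hne]]]]] | nex]; last first.
  apply: (CO_of i0 k3 hu) => p q; apply: (antisym_of i0).
    by rewrite mxtrace_mulC mulKmx // trJ.
  move=> a b ab; split; apply/eqP; apply: contrapT => hn; apply: nex;
    exists p, q, a, b; split => //; [left|right]; exact/negP.
exfalso.
have hY : Lset E (Y p q) := L_conj HG Hp Hh (L_J p q HG Hp HS).
have hab := L_delta HG Hp HS ab hY hne.
have Ldel : forall x y : 'I_k, x != y -> Lset E (delta_mx x y).
  apply: (moving (V := Lset E) k3 _ _ ab hab).
  - by move=> x y X hX; exact: (L_br (L_J x y HG Hp HS) hX).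
  - by move=> c X hX; exact: L_scale.
have [A [HA Ans]] : exists A, A \in E /\ ~ (exists c, A = c%:M).
  apply: contrapT => hn.
  have sub : (E <= <[1%:M : 'M[R]_k]>)%VS.
    apply/subvP => A HA; case: (pselect (exists c, A = c%:M)) => [[c ->]|hc].
      by rewrite -[c%:M]scalemx1; apply: memvZ; exact: memv_line.
    by exfalso; apply: hn; exists A.
  have := dimvS sub; rewrite dim_vline.
  by case: (1%:M != 0) => /=; lia.
have [a' [b' [ab' hAne]]] : exists a b, a != b /\ (A a b != 0 \/ A a a - A b b != 0).
  apply: contrapT => hn; apply: Ans; exists (A i0 i0).
  apply/matrixP => x y; rewrite mxE.
  case: (eqVneq x y) => [<-|xy] /=.
    case: (eqVneq x i0) => [->|xi]; rewrite ?mulr1n //.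
    apply/eqP; rewrite -subr_eq0; apply/eqP; apply: contrapT => hc; apply: hn.
    by exists x, i0; split => //; right; apply/eqP.
  rewrite mulr0n; apply: contrapT => hc; apply: hn.
  by exists x, y; split => //; left; apply/eqP.
have [i [j [C [ij [HC Cji]]]]] : exists i j (C : 'M[R]_k), i != j /\ C \in E /\ C j i != 0.
  case: hAne => hA.
    by exists b', a', A; split => //; rewrite eq_sym.
  exists b', a', (br (Jm R a' b') A); split; first by rewrite eq_sym.
  by rewrite brJ_entry //; split => //; exact: (EJ a' b' HG Hp HS HA).
have Eij : delta_mx i j \in E.
  have := Ldel i j ij _ (Ldel i j ij _ HC); rewrite dbr2 // => h2.
  have -> : delta_mx i j = (-2 * C j i)^-1 *: ((-2 * C j i) *: delta_mx i j).
    by rewrite scalerA mulVf ?scale1r // mulf_neq0 // oppr_eq0 pnatr_eq0.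
  exact: memvZ.
have Edel : forall x y : 'I_k, x != y -> delta_mx x y \in E.
  apply: (moving (V := fun X => X \in E) k3 _ _ ij Eij).
  - by move=> x y X hX; exact: (EJ x y HG Hp HS hX).
  - by move=> c X hX; exact: memvZ.
have Ediag : forall x y : 'I_k, delta_mx x x - delta_mx y y \in E.
  move=> x y; case: (eqVneq x y) => [->|xy]; first by rewrite subrr mem0v.
  by rewrite -dbr //; apply: Ldel => //; apply: Edel; rewrite eq_sym.
have Etr : forall X : 'M[R]_k, \tr X = 0 -> X \in E.
  move=> X tX.
  have -> : X = \sum_(x < k) \sum_(y < k) X x y *:
      (if x == y then delta_mx x x - delta_mx i0 i0 else delta_mx x y).
    transitivity (\sum_(x < k) \sum_(y < k) (X x y *: delta_mx x y -
        (if x == y then X x x *: delta_mx i0 i0 else 0))).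
      rewrite (eq_bigr (fun x => \sum_(y < k) X x y *: delta_mx x y - X x x *: delta_mx i0 i0)).
        rewrite sumrB -matrix_sum_delta -scaler_suml.
        have -> : \sum_(x < k) X x x = 0 by exact: tX.
        by rewrite scale0r subr0.
      move=> x _; rewrite sumrB; congr (_ - _).
      rewrite -big_mkcond /= (big_pred1 x) // => y; by rewrite eq_sym.
    apply: eq_bigr => x _; apply: eq_bigr => y _.
    by case: eqVneq => [->|_]; rewrite ?scalerBr ?subr0.
  apply: memv_suml => x _; apply: memv_suml => y _; apply: memvZ.
  by case: (eqVneq x y) => [->|xy]; [exact: Ediag | exact: Edel].
have full : (fullv <= E + <[1%:M : 'M[R]_k]>)%VS.
  apply/subvP => X _.
  have -> : X = (X - (\tr X / k%:R) *: 1%:M) + (\tr X / k%:R) *: 1%:M by rewrite subrK.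
  apply: memv_add; last by apply: memvZ; exact: memv_line.
  apply: Etr; rewrite linearB /= linearZ /= mxtrace1 -mulr_natr divfK ?subrr //.
  by rewrite mul1r pnatr_eq0 -lt0n.
have := dimvS full; rewrite dimvf /=.
have := dimv_add_leqif E <[1%:M : 'M[R]_k]> => -[+ _].
rewrite dim_vline; move: d2; rewrite -mulnn.
move=> h1 h2 h3.
have h4 : (k * k <= \dim (E + <[1%:M : 'M[R]_k]>))%N by exact: h3.
apply: (dimfin h1 _ h4); apply: leq_trans h2 _; rewrite leq_add2l; exact: leq_b1.
Qed.
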